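(* There exist absolute constants $0<c<C$ such that for every odd $n\ge3$ and every $\alpha>0$, the function $hs_\alpha(x)=\min\big(\alpha,\frac{2\alpha}{n}\sum_{i=1}^nx_i\big)$ on $\{0,1\}^n$ satisfies $$c\,\frac{\alpha^2}{n}\le\|hs_\alpha\|_2^2-\widehat{hs_\alpha}(\emptyset)^2-\widehat{hs_\alpha}([n])^2\le C\,\frac{\alpha^2}{n}.$$
   Context: Fourier analysis: for $S\subseteq[n]$ let $\chi_S(x)=(-1)^{\sum_{i\in S}x_i}$ and $\hat f(S)=\mathbb E_{x\sim U(\{0,1\}^n)}[f(x)\chi_S(x)]$; $\|f\|_2^2=\mathbb E_x[f(x)^2]=\sum_S\hat f(S)^2$. *)

(* Defs.v *)
(* Boolean cube {0,1}^n = {ffun 'I_n -> bool}; real values in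
   an arbitrary realFieldType R (for R = the reals this is the paper's setting). *)
From HB Require Import structures.
From mathcomp Require Import all_boot all_order all_algebra.
Set Implicit Arguments. Unset Strict Implicit. Unset Printing Implicit Defensive.
Import Order.TTheory GRing.Theory Num.Theory.
Local Open Scope ring_scope.

Notation cube n := {ffun 'I_n -> bool}.

Definition chi (R : ringType) (n : nat) (S : {set 'I_n}) (x : cube n) : R :=
  (-1) ^+ (\sum_(i in S) (x i : nat))%N.

Definition expect (R : fieldType) (n : nat) (g : cube n -> R) : R :=
  (2 ^+ n)^-1 * \sum_(x : cube n) g x.

Definition fhat (R : fieldType) (n : nat) (f : cube n -> R) (S : {set 'I_n}) : R :=
  expect (fun x => f x * chi R S x).

Definition norm2sq (R : fieldType) (n : nat) (f : cube n -> R) : R :=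
  expect (fun x => f x ^+ 2).

Definition hs (R : realFieldType) (n : nat) (alpha : R) (x : cube n) : R :=
  Num.min alpha (2 * alpha / n%:R * \sum_(i < n) (x i : nat)%:R).
Arguments hs {R} n alpha x.

(* Main.v *)
Require Import Defs.
From HB Require Import structures.
From mathcomp Require Import all_boot all_order all_algebra ring lra.
Import Order.TTheory GRing.Theory Num.Theory.
Local Open Scope ring_scope.
Set Implicit Arguments. Unset Strict Implicit.

Section S.
Variables (R : realFieldType) (n : nat).
Local Notation E := (@expect R n).

Lemma eq_expect (f g : cube n -> R) : (forall x, f x = g x) -> E f = E g.
Proof. by move=> h; rewrite /expect; congr (_ * _); apply: eq_bigr. Qed.

Arguments eq_expect {f g} _.

Lemma expectD (f g : cube n -> R) : E (fun x => f x + g x) = E f + E g.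
Proof. by rewrite /expect big_split mulrDr. Qed.

Lemma expectZ c (f : cube n -> R) : E (fun x => c * f x) = c * E f.
Proof. by rewrite /expect -mulr_sumr mulrCA. Qed.

Lemma expect_sum (F : 'I_n -> cube n -> R) :
  E (fun x => \sum_i F i x) = \sum_i E (F i).
Proof. by rewrite /expect exchange_big mulr_sumr. Qed.

Lemma expect1 : E (fun _ => 1) = 1.
Proof.
rewrite /expect sumr_const card_ffun card_bool card_ord -natrX.
by rewrite mulVf // pnatr_eq0 expn_eq0.
Qed.

Lemma expect_ge0 (f : cube n -> R) : (forall x, 0 <= f x) -> 0 <= E f.
Proof.
move=> h; rewrite /expect mulr_ge0 ?sumr_ge0 // invr_ge0.
by rewrite exprn_ge0.
Qed.

Lemma expect_le (f g : cube n -> R) : (forall x, f x <= g x) -> E f <= E g.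
Proof.
move=> h; rewrite -subr_ge0.
have -> : E g - E f = E (fun x => 1 * g x + (-1) * f x).
  by rewrite expectD !expectZ; ring.
by apply: expect_ge0 => x; rewrite mul1r mulN1r subr_ge0.
Qed.

Lemma expect_anti (h : cube n -> cube n) (f : cube n -> R) :
  injective h -> (forall x, f (h x) = - f x) -> E f = 0.
Proof.
move=> ih hf; rewrite /expect.
have e : \sum_x f x = - \sum_x f x.
  by rewrite {1}(reindex_inj ih) /= -sumrN; apply: eq_bigr => x _; rewrite hf.
have : (\sum_x f x) *+ 2 = 0 by rewrite mulr2n {1}e addNr.
by move/eqP; rewrite mulrn_eq0 /= => /eqP ->; rewrite mulr0.
Qed.

Arguments expect_anti {h f} _ _.

Lemma expect_swap (h : cube n -> cube n) (f : cube n -> R) :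
  injective h -> E (fun x => f (h x)) = E f.
Proof. by move=> ih; rewrite /expect [in RHS](reindex_inj ih). Qed.

Definition flip (j : 'I_n) (x : cube n) : cube n :=
  [ffun i => if i == j then ~~ x i else x i].
Definition comp (x : cube n) : cube n := [ffun i => ~~ x i].

Lemma flipK j : involutive (flip j).
Proof.
move=> x; apply/ffunP => i; rewrite !ffunE.
by case: (i == j) => //; rewrite negbK.
Qed.
Lemma compK : involutive comp.
Proof. by move=> x; apply/ffunP => i; rewrite !ffunE negbK. Qed.

Definition e (i : 'I_n) (x : cube n) : R := if x i then 1 else -1.
Definition chiT (x : cube n) : R := chi R setT x.
Definition psi (x : cube n) : R := \sum_i e i x.

Lemma chi_flip j x : chiT (flip j x) = - chiT x.
Proof.
rewrite /chiT /chi (bigD1 j) ?inE //= [in RHS](bigD1 j) ?inE //= !exprD ffunE eqxx.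
rewrite (eq_bigr (fun i => (x i : nat))); last first.
  by move=> i /andP[_ /negbTE ne]; rewrite ffunE ne.
by case: (x j) => /=; rewrite ?expr0 ?expr1 ?mulN1r ?mul1r ?opprK.
Qed.

Lemma e_flip i j x : i != j -> e i (flip j x) = e i x.
Proof. by move=> /negbTE ne; rewrite /e ffunE ne. Qed.
Lemma e_flipj j x : e j (flip j x) = - e j x.
Proof. by rewrite /e ffunE eqxx; case: (x j); rewrite /= ?opprK. Qed.
Lemma e_sq i x : e i x ^+ 2 = 1.
Proof. by rewrite /e; case: (x i); rewrite ?sqrrN expr1n. Qed.
Lemma chi_sq x : chiT x ^+ 2 = 1.
Proof.
rewrite /chiT /chi; move: (\sum_(i in _) _)%N => k.
by rewrite -exprM mulnC exprM sqrrN !expr1n.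
Qed.
Lemma psi_comp x : psi (comp x) = - psi x.
Proof.
rewrite /psi -sumrN; apply: eq_bigr => i _.
by rewrite /e ffunE; case: (x i); rewrite /= ?opprK.
Qed.

Hypothesis n2 : (1 < n)%N.

Definition o0 : 'I_n := Ordinal (ltnW n2).
Definition o1 : 'I_n := Ordinal n2.
Definition other (i : 'I_n) : 'I_n := if i == o0 then o1 else o0.
Lemma other_ne i : i != other i.
Proof.
rewrite /other; have [->|ne] := eqVneq i o0; last by rewrite (negbTE ne).
by rewrite ?eqxx; apply/eqP => /(congr1 val).
Qed.

Lemma E_chi : E chiT = 0.
Proof. by apply: (expect_anti (can_inj (flipK o0))) => x; rewrite chi_flip. Qed.

Lemma E_psi : E psi = 0.
Proof. by apply: (expect_anti (can_inj compK)) => x; rewrite psi_comp. Qed.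

Lemma E_psichi : E (fun x => psi x * chiT x) = 0.
Proof.
rewrite (eq_expect (g := fun x => \sum_i e i x * chiT x)); last first.
  by move=> x; rewrite /psi mulr_suml.
rewrite expect_sum big1 // => i _.
apply: (expect_anti (can_inj (flipK (other i)))) => x.
by rewrite chi_flip e_flip ?other_ne // mulrN.
Qed.

Lemma E_psi2 : E (fun x => psi x ^+ 2) = n%:R.
Proof.
rewrite (eq_expect (g := fun x => \sum_i \sum_j e i x * e j x)); last first.
  by move=> x; rewrite /psi expr2 mulr_suml; apply: eq_bigr => i _; rewrite mulr_sumr.
rewrite expect_sum -[n in n%:R]card_ord -sumr_const; apply: eq_bigr => i _.
rewrite expect_sum (bigD1 i) //= big1 ?addr0.
  by rewrite (eq_expect (g := fun _ => 1)) ?expect1 // => x; rewrite -expr2 e_sq.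
move=> j ne; apply: (expect_anti (can_inj (flipK j))) => x.
by rewrite e_flipj e_flip 1?eq_sym // mulrN.
Qed.


Lemma proj (g c p : cube n -> R) :
  E c = 0 -> E (fun x => c x ^+ 2) = 1 -> E p = 0 ->
  E (fun x => p x * c x) = 0 -> 0 < E (fun x => p x ^+ 2) ->
  E (fun x => g x * p x) ^+ 2 <=
  E (fun x => p x ^+ 2) * (E (fun x => g x ^+ 2) - E g ^+ 2 - E (fun x => g x * c x) ^+ 2).
Proof.
move=> Ec Ec2 Ep Epc vpos.
set a := E g; set b := E (fun x => g x * c x); set w := E (fun x => g x * p x).
set v := E (fun x => p x ^+ 2).
pose h x := g x - a - b * c x.
have Eh2 : E (fun x => h x ^+ 2) = E (fun x => g x ^+ 2) - a ^+ 2 - b ^+ 2.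
  rewrite (eq_expect (g := fun x => 1 * g x ^+ 2 + (a ^+ 2 * 1 + (b ^+ 2 * c x ^+ 2
      + ((-2 * a) * g x + ((-2 * b) * (g x * c x) + (2 * a * b) * c x)))))); last first.
    by move=> x; rewrite /h; ring.
  rewrite !expectD !expectZ expect1 Ec Ec2 -/a -/b; ring.
have Ehp : E (fun x => h x * p x) = w.
  rewrite (eq_expect (g := fun x => 1 * (g x * p x) + ((- a) * p x + (- b) * (p x * c x))));
    last by move=> x; rewrite /h; ring.
  by rewrite !expectD !expectZ Ep Epc -/w; ring.
have : 0 <= E (fun x => (v * h x - w * p x) ^+ 2) by apply: expect_ge0 => x; apply: sqr_ge0.
rewrite (eq_expect (g := fun x => v ^+ 2 * h x ^+ 2 + ((-2 * v * w) * (h x * p x) + w ^+ 2 * p x ^+ 2)));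
  last by move=> x; ring.
rewrite !expectD !expectZ Eh2 Ehp -/v => H.
have : 0 <= v * (v * (E (fun x => g x ^+ 2) - a ^+ 2 - b ^+ 2) - w ^+ 2).
  by move: H; congr (0 <= _); ring.
by rewrite pmulr_rge0 // subr_ge0.
Qed.

Definition s (x : cube n) : R := \sum_(i < n) (x i : nat)%:R.
Definition u (x : cube n) : R := Num.max 0 (- psi x).

Lemma psi_s x : psi x = 2 * s x - n%:R.
Proof.
rewrite /psi /s mulr_sumr -[in n%:R](card_ord n) -sumr_const -sumrB.
by apply: eq_bigr => i _; rewrite /e; case: (x i) => /=; ring.
Qed.

Lemma u_psi x : u x * psi x = - u x ^+ 2.
Proof.
rewrite /u; have [h|h] := boolP (0 <= psi x); last (move: h; rewrite -ltNge => h).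
  by rewrite max_l ?oppr_le0 // mul0r expr0n oppr0.
by rewrite max_r ?oppr_ge0 ?ltW //; ring.
Qed.

Lemma u_comp x : u x ^+ 2 + u (comp x) ^+ 2 = psi x ^+ 2.
Proof.
rewrite /u psi_comp opprK; have [h|h] := boolP (0 <= psi x); last (move: h; rewrite -ltNge => h).
  by rewrite max_l ?oppr_le0 // max_r // expr0n add0r.
by rewrite max_r ?oppr_ge0 ?ltW // max_l ?ltW // expr0n addr0 sqrrN.
Qed.

Lemma Eu2 : 2 * E (fun x => u x ^+ 2) = n%:R.
Proof.
rewrite -E_psi2 (eq_expect (f := fun x => psi x ^+ 2) (g := fun x => 1 * u x ^+ 2 + 1 * u (comp x) ^+ 2));
  last by move=> x; rewrite !mul1r u_comp.
rewrite expectD !expectZ (@expect_swap comp (fun x => u x ^+ 2) (can_inj compK)); ring.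
Qed.

Lemma hs_eq (al : R) x : 0 < al -> hs n al x = al - al / n%:R * u x.
Proof.
move=> ap; have nz : n%:R != 0 :> R by rewrite pnatr_eq0 -lt0n ltnW.
rewrite /hs (_ : 2 * al / n%:R * \sum_(i < n) (x i : nat)%:R = al + al / n%:R * psi x);
  last by rewrite psi_s /s; field.
have anp : 0 < al / n%:R by rewrite divr_gt0 // ltr0n ltnW.
rewrite /u; have [h|h] := boolP (0 <= psi x); last (move: h; rewrite -ltNge => h).
  rewrite max_l ?oppr_le0 // mulr0 subr0 min_l //.
  by rewrite lerDl mulr_ge0 // ltW.
rewrite max_r ?oppr_ge0 ?ltW // min_r; first by ring.
by rewrite gerDl pmulr_rle0 // ltW.
Qed.

End S.

Theorem mainTheorem20 (R : realFieldType) :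
  exists c C : R, 0 < c /\ c < C /\
    forall (n : nat) (alpha : R), odd n -> (3 <= n)%N -> 0 < alpha ->
      c * (alpha ^+ 2 / n%:R) <=
        norm2sq (hs n alpha) - fhat (hs n alpha) set0 ^+ 2 - fhat (hs n alpha) setT ^+ 2
      /\
      norm2sq (hs n alpha) - fhat (hs n alpha) set0 ^+ 2 - fhat (hs n alpha) setT ^+ 2
        <= C * (alpha ^+ 2 / n%:R).
Proof.
exists (1/4), 1; split; first by rewrite mul1r invr_gt0 ltr0n.
split; first by rewrite ltr_pdivrMr // mul1r ltr1n.
move=> n al _ n3 ap.
have n2 : (1 < n)%N by apply: leq_trans n3.
have npos : 0 < n%:R :> R by rewrite ltr0n ltnW.
have nz : n%:R != 0 :> R by rewrite gt_eqF.
set f := hs n al.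
have f0 : fhat f set0 = expect f.
  by apply: eq_expect => x; rewrite /chi big_set0 expr0 mulr1.
rewrite f0 /norm2sq.
set a := expect f; set Q := (X in _ <= X /\ X <= _).
have fe : forall x, f x = al - al / n%:R * u R x by move=> x; apply: (hs_eq n2).
have W := Eu2 R n.
set U := expect (fun x => u R x ^+ 2) in W.
have Ec2 : expect (fun x : cube n => chiT R x ^+ 2) = 1.
  by rewrite -(expect1 R n); apply: eq_expect => x; rewrite chi_sq.
have P := proj f (E_chi R n2) Ec2 (E_psi R n) (E_psichi R n2).
rewrite E_psi2 in P; have {}P := P npos.
have Ew : expect (fun x => f x * psi R x) = al / n%:R * U.
  rewrite (eq_expect (g := fun x => al * psi R x + al / n%:R * u R x ^+ 2)); last first.
    by move=> x; rewrite fe mulrBl -(mulrA (al / n%:R)) u_psi; ring.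
  by rewrite expectD !expectZ E_psi // mulr0 add0r.
have HU : U = n%:R / 2 by rewrite -W; field.
set V := expect (@u R n).
have Ea : a = al - al / n%:R * V.
  rewrite /a (eq_expect (g := fun x => al * 1 + (- (al / n%:R)) * u R x)); last first.
    by move=> x; rewrite fe; ring.
  by rewrite expectD !expectZ expect1 /V; ring.
have Ef2 : expect (fun x => f x ^+ 2) = al ^+ 2 - 2 * al * (al / n%:R) * V + (al / n%:R) ^+ 2 * U.
  rewrite (eq_expect (g := fun x => al ^+ 2 * 1 + ((- 2 * al * (al / n%:R)) * u R x
     + (al / n%:R) ^+ 2 * u R x ^+ 2))); last by move=> x; rewrite fe; ring.
  by rewrite !expectD !expectZ expect1 /V /U; ring.
rewrite Ew in P.
rewrite /Q /fhat.
change (expect (fun x : cube n => f x * chi R setT x)) with (expect (fun x : cube n => f x * chiT R x)).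
split.
- have -> : 1 / 4 * (al ^+ 2 / n%:R) = (al / n%:R * U) ^+ 2 / n%:R by rewrite HU; field.
  by rewrite ler_pdivrMr // [X in _ <= X]mulrC; exact: P.
- rewrite Ef2 Ea HU.
  set k := al / n%:R.
  have -> : 1 * (al ^+ 2 / n%:R) = k ^+ 2 * n%:R by rewrite /k; field.
  set b := expect _.
  have k0 : 0 <= k ^+ 2 by apply: sqr_ge0.
  nra.
Qed.
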